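(* Let $X$ be a Tychonoff space containing clopen subsets $U_n$, $n\in\omega$, such that $U_{n+1}\subset U_n$ for all $n\in\omega$ and $C=\bigcap_{n\in\omega}U_n$ is nonempty and not open. Then there exists a nondiscrete countable Tychonoff space $Y$ such that $F_G(Y)$, $A_G(Y)$, and $B_G(Y)$ are topological quotient groups of $F_G(X)$, $A_G(X)$, and $B_G(X)$, respectively.
   Context: For a Tychonoff space $X$ with a fixed point $x_0$, the Graev free topological group $F_G(X)$ is the unique topological group with identity $x_0$ containing $X$ as a subspace such that every continuous map from $X$ to a topological group $G$ sending $x_0$ to the identity extends to a continuous homomorphism $F_G(X)\to G$ (it does not depend on the choice of $x_0$ up to topological isomorphism). The Graev free Abelian topological group $A_G(X)$ and free Boolean topological group $B_G(X)$ are defined analogously, with the group being Abelian (resp. Boolean, i.e., all elements of order at most $2$) and only maps into Abelian (resp. Boolean) topological groups required to extend. A topological group $H$ is a topological quotient of $G$ if $H$ is topologically isomorphic to $G/N$ with the quotient topology for some closed normal subgroup $N$. *)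

(* Defs.v *)
From HB Require Import structures.
From mathcomp Require Import all_boot monoid.
From mathcomp Require Import all_classical all_reals topology.
From mathcomp Require Import Rstruct Rstruct_topology.

Set Implicit Arguments.
Unset Strict Implicit.
Unset Printing Implicit Defensive.

Local Open Scope classical_set_scope.

#[short(type="topGroupType")]
HB.structure Definition TopGroup := {G of Group G & Topological G}.

Definition tychonoff_space (T : topologicalType) : Prop :=
  (forall x y : T, x <> y -> exists U : set T, open U /\ U x /\ ~ U y) /\
  (forall (a : T) (B : set T), closed B -> ~ B a ->
     exists f : T -> Rdefinitions.R, continuous f /\ f a = Rdefinitions.R0 /\
       (forall b, B b -> f b = Rdefinitions.R1)).

Definition discrete_top (T : topologicalType) : Prop :=
  forall x : T, open [set x].

Definition top_embedding (X : topologicalType) (G : topologicalType)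
    (e : X -> G) : Prop :=
  continuous e /\ injective e /\
  (forall U : set X, open U -> exists V : set G, open V /\ U = e @^-1` V).

Local Open Scope group_scope.

Definition topological_group (G : topGroupType) : Prop :=
  continuous (fun p : G * G => p.1 * p.2) /\ continuous (fun x : G => x^-1).

Definition abelian_group (G : topGroupType) : Prop :=
  forall x y : G, x * y = y * x.

Definition boolean_group (G : topGroupType) : Prop :=
  forall x : G, x * x = 1.

Definition any_group (G : topGroupType) : Prop := True.

Definition group_hom (G H : topGroupType) (h : G -> H) : Prop :=
  forall x y : G, h (x * y) = h x * h y.

Definition generates (X : Type) (G : topGroupType) (e : X -> G) : Prop :=
  forall S : set G, S 1 -> (forall x y, S x -> S y -> S (x * y)) ->
    (forall x, S x -> S x^-1) -> range e `<=` S -> S = setT.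

Definition graev_free (P : topGroupType -> Prop) (X : topologicalType) (x0 : X)
    (F : topGroupType) (e : X -> F) : Prop :=
  [/\ topological_group F, P F, top_embedding e, e x0 = 1 &
    generates e] /\
    forall (G : topGroupType), topological_group G -> P G ->
    forall f : X -> G, continuous f -> f x0 = 1 ->
    exists h : F -> G, [/\ group_hom h, continuous h & forall x, h (e x) = f x].

Definition graev_free_group := graev_free any_group.
Definition graev_free_abelian_group := graev_free abelian_group.
Definition graev_free_boolean_group := graev_free boolean_group.

(** H is a topological quotient of G: H is topologically isomorphic to G/N
    (quotient topology) for a closed normal subgroup N; unfolded as the
    existence of a surjective homomorphism p : G -> H with closed kernel N
    such that H carries the quotient topology induced by p. *)
Definition top_quotient (G H : topGroupType) : Prop :=
  exists p : G -> H, [/\ group_hom p, (forall y : H, exists x : G, p x = y),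
    closed (p @^-1` [set 1]) &
    forall U : set H, open U <-> open (p @^-1` U)].

(* Main.v *)
Require Import Defs.
From HB Require Import structures.
From mathcomp Require Import all_boot monoid.
From mathcomp Require Import all_classical all_reals topology.
From mathcomp Require Import Rstruct Rstruct_topology.
Set Implicit Arguments.
Unset Strict Implicit.
Unset Printing Implicit Defensive.
Local Open Scope classical_set_scope.

Definition dG (G : topGroupType) : Type := G.
HB.instance Definition _ (G : topGroupType) := Group.copy (dG G) G.
Program Definition dG_mixin (G : topGroupType) :=
  @isOpenTopological.Build (dG G) (fun _ => True) _ _ _.
Next Obligation. by []. Qed.
Next Obligation. by []. Qed.
Next Obligation. by []. Qed.
HB.instance Definition _ (G : topGroupType) := dG_mixin G.
Lemma dG_open (G : topGroupType) (A : set (dG G)) : open A.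
Proof. by []. Qed.

Definition qT (X : topologicalType) (Y : choiceType) (r : X -> Y) : Type := Y.
HB.instance Definition _ (X : topologicalType) (Y : choiceType) (r : X -> Y) := Choice.copy (qT r) Y.
Section qTsec.
Variables (X : topologicalType) (Y : choiceType) (r : X -> Y).
Let op := fun A : set (qT r) => open (r @^-1` A).
Lemma qT_opT : op setT.
Proof. rewrite /op preimage_setT; exact: openT. Qed.
Lemma qT_opI : setI_closed op.
Proof. by move=> A B oA oB; rewrite /op preimage_setI; exact: openI. Qed.
Lemma qT_opU (I : Type) (f : I -> set (qT r)) : (forall i, op (f i)) -> op (\bigcup_i f i).
Proof. by move=> ofi; rewrite /op preimage_bigcup; apply: bigcup_open => i _; exact: ofi. Qed.
Definition qT_mixin := @isOpenTopological.Build (qT r) op qT_opT qT_opI qT_opU.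
End qTsec.
HB.instance Definition _ (X : topologicalType) (Y : choiceType) (r : X -> Y) := qT_mixin r.
Lemma qT_open (X : topologicalType) (Y : choiceType) (r : X -> Y) (A : set (qT r)) :
  open A <-> open (r @^-1` A).
Proof. by []. Qed.
HB.instance Definition _ (X : topologicalType) (H : topGroupType) (r : X -> H) := Group.copy (qT r) H.

Local Open Scope group_scope.

Lemma openP' (T : topologicalType) (A : set T) :
  (forall x, A x -> nbhs x A) -> open A.
Proof. by move=> h; rewrite openE. Qed.

Lemma open_nbhs' (T : topologicalType) (A : set T) x : open A -> A x -> nbhs x A.
Proof. by move=> oA Ax; apply: open_nbhs_nbhs. Qed.

Section GroupFacts.
Variables (G H : topGroupType) (h : G -> H).
Hypothesis hM : group_hom h.
Lemma hom1 : h 1 = 1.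
Proof. have := hM 1 1; rewrite mul1g => e; apply: (mulgI (h 1)); by rewrite -e mulg1. Qed.
Lemma homV x : h x^-1 = (h x)^-1.
Proof. by apply/esym/mulg1_eq; rewrite -hM mulgV hom1. Qed.
End GroupFacts.

Lemma gen_eq (X : Type) (G H : topGroupType) (e : X -> G) (h1 h2 : G -> H) :
  generates e -> group_hom h1 -> group_hom h2 -> (forall x, h1 (e x) = h2 (e x)) ->
  forall z, h1 z = h2 z.
Proof.
move=> ge m1 m2 he z.
have := ge [set z | h1 z = h2 z]; rewrite /= (hom1 m1) (hom1 m2) => /(_ erefl).
move=> /(_ _)/(_ _)/(_ _) E.
suff E2 : [set z | h1 z = h2 z] = setT by have : [set z | h1 z = h2 z] z by rewrite E2.
apply: E.
- by move=> a b ea eb; rewrite m1 m2 ea eb.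
- by move=> a ea; rewrite (homV m1) (homV m2) ea.
- by move=> _ [x _ <-].
Qed.

Lemma transl_cont (G : topGroupType) (k : G) : topological_group G ->
  continuous (fun y : G => y * k).
Proof.
move=> [cm _] x.
have -> : (fun y : G => y * k) = (fun q : G * G => q.1 * q.2) \o (fun y => (y, k)) by [].
apply: continuous_comp; last exact: cm.
exact: (cvg_pair cvg_id (cvg_cst k)).
Qed.

Section QuotGroup.
Variables (G H : topGroupType) (p : G -> H).
Hypotheses (tG : topological_group G) (hp : group_hom p)
  (sp : forall y, exists x, p x = y).

Lemma p_open (W : set G) : open W -> open (p @^-1` (p @` W)).
Proof.
move=> oW; apply: openP' => x [w Ww pwx].
pose k := x^-1 * w.
have tx : (fun y => y * k) x = w by rewrite /k mulgA mulgV mul1g.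
have : nbhs x ((fun y => y * k) @^-1` W).
  apply: (@transl_cont _ k tG x); rewrite /= tx; exact: open_nbhs'.
apply: filterS => y /= Wy; exists (y * k) => //.
by rewrite hp /k hp (homV hp) pwx mulVg mulg1.
Qed.

Lemma qT_open_img (W : set G) : open W -> open (p @` W : set (qT p)).
Proof. by move=> oW; apply/qT_open; exact: p_open. Qed.

Lemma qT_topgroup : topological_group (qT p).
Proof.
split.
- apply/continuousP => A oA; apply: openP' => -[a b] /= Aab.
  have [a' pa] := sp a; have [b' pb] := sp b.
  have oA' : open (p @^-1` A) := oA.
  have : nbhs (a', b') ((fun q : G * G => q.1 * q.2) @^-1` (p @^-1` A)).
    apply: tG.1; apply: open_nbhs' => //=; by rewrite hp pa pb.
  move=> [[W1 W2] [/= n1 n2] sW].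
  move: n1; rewrite nbhsE => -[O1 [oO1 O1a] s1].
  move: n2; rewrite nbhsE => -[O2 [oO2 O2b] s2].
  exists (p @` O1, p @` O2); first split => /=.
  + by apply: (@open_nbhs' (qT p)); [exact: qT_open_img | rewrite -pa; exists a'].
  + by apply: (@open_nbhs' (qT p)); [exact: qT_open_img | rewrite -pb; exists b'].
  move=> [u v] /= [[u' Ou' <-] [v' Ov' <-]].
  have := sW (u', v'); rewrite /= -hp; apply; split; [exact: s1 | exact: s2].
- apply/continuousP => A oA; apply/qT_open.
  have -> : p @^-1` ((fun x : qT p => x^-1) @^-1` A) = (fun x : G => x^-1) @^-1` (p @^-1` A).
    by apply/seteqP; split => x /=; rewrite (homV hp).
  by move/continuousP : tG.2; apply.
Qed.
End QuotGroup.

Lemma quot_main (P : topGroupType -> Prop) (X Y : topologicalType) (r : X -> Y) (x0 : X)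
  (Hr : forall A : set Y, open A <-> open (r @^-1` A)) (rs : forall y, exists x, r x = y)
  (FX : topGroupType) (eFX : X -> FX) (FY : topGroupType) (eFY : Y -> FY)
  (PQ : P FY -> forall p : FX -> FY, P (qT p))
  (T1 : closed [set (1 : FY)]) :
  graev_free P x0 eFX -> graev_free P (r x0) eFY -> top_quotient FX FY.
Proof.
move=> [[tFX PFX [ceX [_ _]] eX1 gX] uX] [[tFY PFY [ceY [_ _]] eY1 gY] uY].
have cr : continuous r by apply/continuousP => A /Hr.
have cf : continuous (eFY \o r) by move=> x; apply: continuous_comp; [exact: cr | exact: ceY].
have [p [hp cp pe]] := uX FY tFY PFY (eFY \o r) cf eY1.
have sp : forall y, exists x, p x = y.
  move=> y.
  suff E2 : range p = setT.
    have : range p y by rewrite E2.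
    by case=> x _ <-; exists x.
  apply: gY.
  - by exists 1 => //; exact: hom1.
  - by move=> _ _ [a _ <-] [b _ <-]; exists (a * b) => //; rewrite hp.
  - by move=> _ [a _ <-]; exists a^-1 => //; rewrite (homV hp).
  - by move=> _ [y' _ <-]; have [x <-] := rs y'; exists (eFX x) => //; rewrite pe.
exists p; split => //.
  by move/continuous_closedP : cp; apply.
move=> U; split; first by move/continuousP : cp; apply.
move=> oU.
have tQ := qT_topgroup tFX hp sp.
have ce : continuous (eFY : Y -> qT p).
  apply/continuousP => A oA; apply/Hr.
  have -> : r @^-1` (eFY @^-1` A) = eFX @^-1` (p @^-1` A).
    by apply/seteqP; split => x /=; rewrite pe.
  by move/continuousP : ceX; apply.
have [h [hh ch he]] := uY (qT p) tQ (PQ PFY p) (eFY : Y -> qT p) ce eY1.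
have hid : forall z, h z = (z : qT p).
  by apply: (gen_eq gY hh) => // a b.
have -> : U = h @^-1` (U : set (qT p)) by apply/seteqP; split => z /=; rewrite hid.
by move/continuousP : ch; apply.
Qed.

Lemma dG_topgroup (G : topGroupType) : topological_group (dG G).
Proof.
split; apply/continuousP => A _; apply: openP'; last by move=> x Ax; exact: (@open_nbhs' (dG G) _ x (dG_open _) Ax).
move=> -[a b] Ma.
exists ([set a], [set b]); first by split; exact: (@open_nbhs' (dG G) _ _ (dG_open _)).
by move=> [u v] [/= -> ->].
Qed.

Section T1.
Variables (P : topGroupType -> Prop) (Y : topologicalType) (y0 inf : Y) (E : nat -> set Y).
Hypotheses (E1 : forall k, ~ E k inf) (E2 : forall k k', (k <= k')%N -> E k `<=` E k')
  (E3 : forall y, y <> inf -> exists k, E k y) (E4 : forall A : set Y, ~ A inf -> open A)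
  (E5 : forall k, open (~` E k)).
Variables (FY : topGroupType) (eFY : Y -> FY).
Hypotheses (PD : P (dG FY)) (FF : graev_free P y0 eFY).

Let f k y : dG FY := if pselect (E k y) then eFY y else eFY inf.

Let f_cont k : continuous (f k).
Proof.
apply/continuousP => A _; apply: openP' => y /=; rewrite /f.
case: pselect => Eky Ay.
  apply: (@filterS _ _ _ (E k `&` (f k @^-1` A))); first by move=> ? [].
  apply: open_nbhs'; first by apply: E4 => -[/E1].
  by split => //=; rewrite /f; case: pselect.
apply: (@filterS _ _ _ (~` E k)); last exact: open_nbhs'.
by move=> y' /= nE; rewrite /f; case: pselect.
Qed.

Let prop k (h : FY -> dG FY) := group_hom h /\ forall y, h (eFY y) = f k y.

Let k0_ex : exists k0, forall k, (k0 <= k)%N -> f k y0 = 1.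
Proof.
have [[_ _ _ eY1 _] _] := FF.
have [e|ne] := pselect (y0 = inf).
  exists 0%N => k _; rewrite /f; case: pselect => ?; by rewrite -?e.
have [k0 Ek0] := E3 ne; exists k0 => k lek; rewrite /f; case: pselect => // nE.
by case: (nE (E2 lek Ek0)).
Qed.

Let hex k0 (Hk0 : forall k, (k0 <= k)%N -> f k y0 = 1) k : (k0 <= k)%N ->
  exists h, prop k h /\ continuous h.
Proof.
move=> lek; have [_ uY] := FF.
have [h [hh ch he]] := uY (dG FY) (dG_topgroup FY) PD (f k) (@f_cont k) (Hk0 k lek).
by exists h.
Qed.

Let comp_hom (h h' : FY -> dG FY) : group_hom h -> group_hom h' ->
  group_hom (G := FY) (H := dG FY) (fun z => h' (h z)).
Proof. by move=> hh hh' a b /=; rewrite hh hh'. Qed.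

Lemma free_T1 : closed [set (1 : FY)].
Proof.
have [[_ _ _ eY1 gY] uY] := FF.
have [k0 Hk0] := k0_ex.
pose S := [set z : FY | exists k, (k0 <= k)%N /\ forall h, prop k h -> h z = z].
have mono : forall z k k', (k0 <= k)%N -> (k <= k')%N -> (forall h, prop k h -> h z = z) ->
    forall h', prop k' h' -> h' z = z.
  move=> z k k' k0k kk' Hz h' [hh' he'].
  have [h [[hh he] _]] := hex Hk0 k0k.
  rewrite -(Hz h); last by split.
  apply: (gen_eq gY (comp_hom hh hh') hh) => y /=; rewrite he.
  rewrite /f; case: pselect => Eky; rewrite he' /f; case: pselect => // nE.
  by case: (nE (E2 kk' Eky)).

have ST : S = setT.
  apply: gY.
  - exists k0; split; first by [].
    by move=> g [hg _]; exact: hom1.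
  - move=> a b [ka [k0a Ha]] [kb [k0b Hb]]; exists (maxn ka kb); split.
      by rewrite (leq_trans k0a) // leq_maxl.
    move=> g [hg ge]; rewrite hg.
    rewrite (mono a ka (maxn ka kb) k0a (leq_maxl _ _) Ha g) //.
    by rewrite (mono b kb (maxn ka kb) k0b (leq_maxr _ _) Hb g).
  - move=> a [ka [k0a Ha]]; exists ka; split; first by [].
    by move=> g [hg ge]; rewrite (homV hg) (Ha g).
  - move=> _ [y _ <-].
    have [->|ne] := pselect (y = inf).
      exists k0; split; first by [].
      by move=> g [hg ge]; rewrite ge /f; case: pselect.
    have [k1 Ek1] := E3 ne; exists (maxn k0 k1); split; first exact: leq_maxl.
    move=> g [hg ge]; rewrite ge /f; case: pselect => // nE.
    by case: (nE (E2 (leq_maxr _ _) Ek1)).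
rewrite -[X in closed X]setCK; apply: open_closedC; apply: openP' => z nz.
have : S z by rewrite ST.
move=> [k [k0k Hz]].
have [h [[hh he] ch]] := hex Hk0 k0k.
have : nbhs z (h @^-1` (~` [set 1])).
  apply: ch; rewrite /= (Hz h) //; apply: open_nbhs' => //.
apply: filterS => w /= hw w1; apply: hw; rewrite w1; exact: hom1.
Qed.
End T1.

Section Concrete.
Variables (X : topologicalType) (U : nat -> set X).
Hypotheses (cU : forall n, clopen (U n)) (dU : forall n, U n.+1 `<=` U n).

Lemma Umono m n : (m <= n)%N -> U n `<=` U m.
Proof.
elim: n => [|n IH]; first by rewrite leqn0 => /eqP ->.
rewrite leq_eqVlt => /orP [/eqP -> //|]; rewrite ltnS => /IH h x /dU; exact: h.
Qed.

Definition Gs k : set X := if k is j.+1 then U j else setT.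
Lemma GsE k x : Gs k x <-> forall j, (j < k)%N -> U j x.
Proof.
case: k => [|k] /=; first by split.
split; last by apply; rewrite ltnS.
by move=> Ux j; rewrite ltnS => /Umono; apply.
Qed.
Lemma Gs_clopen k : clopen (Gs k).
Proof. case: k => [|k] /=; [split; [exact: openT|exact: closedT] | exact: cU]. Qed.

Definition Fm m : set X := ~` U m `&` Gs m.
Lemma Fm_clopen m : clopen (Fm m).
Proof.
have [o1 c1] := cU m; have [o2 c2] := Gs_clopen m.
split; [apply: openI | apply: closedI] => //; [exact: closed_openC | exact: open_closedC].
Qed.

Lemma Fm_uniq m m' x : Fm m x -> Fm m' x -> m = m'.
Proof.
move=> [n1 /GsE g1] [n2 /GsE g2].
case: (ltngtP m m') => // [/g2|/g1] //.
Qed.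

Lemma Fm_ex n x : ~ U n x -> exists m, (m <= n)%N /\ Fm m x.
Proof.
elim: n {-2}n (leqnn n) => [|N IH] n len nU.
  by exists n; split => //; split => //; move: len; rewrite leqn0 => /eqP ->.
have [g|ng] := pselect (Gs n x); first by exists n; split.
move/GsE : ng => /existsNP [j] /not_implyP [jn nUj].
have [m [mj Fmx]] := IH j (leq_trans jn len) nUj.
by exists m; split => //; rewrite (leq_trans mj) // ltnW.
Qed.
End Concrete.

Section Concrete2.
Variables (X : topologicalType) (U : nat -> set X).
Hypotheses (cU : forall n, clopen (U n)) (dU : forall n, U n.+1 `<=` U n).

Local Notation Fm := (Fm U).

Definition rr (x : X) : option nat :=
  match pselect (exists m, Fm m x) with
  | left h => Some (projT1 (cid h))
  | right _ => None
  end.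

Lemma rr_Some x m : rr x = Some m <-> Fm m x.
Proof.
rewrite /rr; case: pselect => [h|nh]; last by split => // Fmx; case: nh; exists m.
case: cid => /= m' Fm'; split; first by case=> <-.
by move=> Fmx; rewrite (Fm_uniq dU Fm' Fmx).
Qed.

Lemma rr_None x : rr x = None <-> forall n, U n x.
Proof.
rewrite /rr; case: pselect => [h|nh]; split => //.
- by move=> allU; have [m [nU _]] := h; case: nU.
- move=> _ n; apply: contrapT => nUn.
  have [m [_ Fmx]] := Fm_ex dU nUn; by apply: nh; exists m.
Qed.

Definition Ys := {y : option nat | `[< exists x, rr x = y >]}.
Definition r' (x : X) : Ys := exist _ (rr x) (asboolT (ex_intro _ x erefl)).
Definition Yt := qT r'.

Variable c : X.
Hypothesis Cc : forall n, U n c.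
Definition inf : Yt := r' c.

Lemma val_inf : val inf = None.
Proof. by apply/rr_None. Qed.

Lemma valN (y : Yt) : val y = None -> y = inf.
Proof. by move=> e; apply: val_inj; rewrite e val_inf. Qed.

Lemma r'_eq x (y : Yt) : r' x = y <-> rr x = val y.
Proof. by split => [<-//|e]; apply: val_inj. Qed.

Lemma pre_single (y : Yt) m : val y = Some m -> r' @^-1` [set y] = Fm m.
Proof.
move=> vy; apply/seteqP; split => x /=.
  by move/r'_eq; rewrite vy => /rr_Some.
by move/rr_Some => e; apply/r'_eq; rewrite vy.
Qed.

Lemma Yopen (A : set Yt) : open A <-> open (r' @^-1` A).
Proof. by []. Qed.

Lemma E4 (A : set Yt) : ~ A inf -> open A.
Proof.
move=> nA; apply/Yopen; apply: openP' => x /= Ax.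
case E : (rr x) => [m|].
  have Fmx : Fm m x by apply/rr_Some.
  apply: (@filterS _ _ _ (Fm m)); last by apply: open_nbhs' => //; have [] := Fm_clopen cU m.
  move=> x' /rr_Some Fx' /=; have -> : r' x' = r' x by apply: val_inj; rewrite /= Fx' E.
  exact: Ax.
by exfalso; apply: nA; have <- : r' x = inf by apply: valN.
Qed.

Definition Ek k : set Yt := [set y | exists m, (m < k)%N /\ val y = Some m].

Lemma E5 k : open (~` Ek k).
Proof.
apply/Yopen.
have -> : r' @^-1` (~` Ek k) = Gs U k.
  apply/seteqP; split => x /=.
    move=> nE; apply/(GsE dU) => j jk; apply: contrapT => nUj.
    have [m [mj Fmx]] := Fm_ex dU nUj; apply: nE; exists m; split.
      exact: leq_ltn_trans mj jk.
    by apply/rr_Some.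
  move=> /(GsE dU) G [m [mk /rr_Some [nU _]]]; exact: nU (G m mk).
by have [] := Gs_clopen cU k.
Qed.

Lemma single_clopen (y : Yt) : y <> inf -> clopen [set y].
Proof.
move=> ny; split; first by apply: E4 => /esym.
case E : (val y) => [m|]; last by case: ny; exact: valN.
rewrite -[X in closed X]setCK; apply: open_closedC; apply/Yopen.
have -> : r' @^-1` (~` [set y]) = ~` (r' @^-1` [set y]) by [].
rewrite (pre_single E); apply: closed_openC.
by have [] := Fm_clopen cU m.
Qed.

Lemma r'_surj (y : Yt) : exists x, r' x = y.
Proof.
case: y => v pv; move/asboolP: (pv) => [x e]; exists x; exact: val_inj.
Qed.

Lemma Y_tych : tychonoff_space Yt.
Proof.
split.
  move=> x y nxy; have [ex|nx] := pselect (x = inf).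
    have ny : y <> inf by move=> ey; apply: nxy; rewrite ex ey.
    exists (~` [set y]); split; last by split => //= e; apply: nxy; rewrite e.
    by apply: closed_openC; have [] := single_clopen ny.
  exists [set x]; split; first by apply: E4 => e; apply: nx; rewrite e.
  by split => //= e; apply: nxy; rewrite e.
move=> a B cB nBa.
have [A [oA cA BA nAa]] : exists A : set Yt, [/\ open A, closed A, B `<=` A & ~ A a].
  have [ea|na] := pselect (a = inf).
    by exists B; split => //; apply: E4; rewrite -ea.
  have [o1 c1] := single_clopen na.
  exists (~` [set a]); split => //.
  - exact: closed_openC.
  - exact: open_closedC.
  - by move=> b Bb eb; apply: nBa; rewrite -eb.
  - by move=> /(_ erefl).
exists (fun y => if pselect (A y) then Rdefinitions.R1 else Rdefinitions.R0); split; last split.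
- apply/continuousP => S _; apply: openP' => y /=; case: pselect => Ay Sy.
    apply: (@filterS _ _ _ A); last exact: (@open_nbhs' Yt A y oA Ay).
    by move=> y' Ay' /=; case: pselect.
  apply: (@filterS _ _ _ (~` A)); last exact: (@open_nbhs' Yt _ y (closed_openC cA) Ay).
  by move=> y' nAy' /=; case: pselect.
- by case: pselect.
- by move=> b /BA Ab; case: pselect.
Qed.

Lemma Y_count : countable [set: Yt].
Proof.
apply/countable_injP; exists (fun y : Yt => pickle (val y)).
by move=> a b _ _ /(pcan_inj pickleK) /val_inj.
Qed.

Lemma Y_nondisc : ~ open (\bigcap_n U n) -> ~ discrete_top Yt.
Proof.
move=> nC D; apply: nC; have := D inf; move/Yopen.
have -> // : r' @^-1` [set inf] = \bigcap_n U n.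
apply/seteqP; split => x /=.
  by move/r'_eq; rewrite val_inf => /rr_None h n _; exact: h.
by move=> h; apply/r'_eq; rewrite val_inf; apply/rr_None => n; exact: h n I.
Qed.

Definition ry (x : X) : Yt := r' x.

Lemma final_part (P : topGroupType -> Prop)
  (HPQ : forall G : topGroupType, P G -> forall (Z : topologicalType) (p : Z -> G), P (qT p))
  (HPD : forall G : topGroupType, P G -> P (dG G)) x0 (FX : topGroupType) (eFX : X -> FX) :
  graev_free P x0 eFX -> forall (FY : topGroupType) (eFY : Yt -> FY),
  graev_free P (ry x0) eFY -> top_quotient FX FY.
Proof.
move=> HX FY eFY HY.
have PFY : P FY by have [[]] := HY.
apply: (quot_main (r := ry) _ r'_surj _ _ HX HY).
- by move=> A; exact: Yopen.
- by move=> _ p; exact: HPQ.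
apply: (@free_T1 P Yt (ry x0) inf Ek) => //.
- by move=> k [m [_]]; rewrite val_inf.
- by move=> k k' kk' y [m [mk e]]; exists m; split => //; exact: leq_trans mk kk'.
- move=> y ny; case E : (val y) => [m|]; last by case: ny; exact: valN.
  by exists m.+1, m.
- exact: E4.
- exact: E5.
- exact: HPD.
exact: HY.
Qed.

End Concrete2.

Close Scope group_scope.

Theorem proposition1 (X : topologicalType) (U : nat -> set X) :
  tychonoff_space X ->
  (forall n, clopen (U n)) ->
  (forall n, U n.+1 `<=` U n) ->
  \bigcap_n U n !=set0 ->
  ~ open (\bigcap_n U n) ->
  forall (x0 : X)
    (FX : topGroupType) (eFX : X -> FX)
    (AX : topGroupType) (eAX : X -> AX)
    (BX : topGroupType) (eBX : X -> BX),
  graev_free_group x0 eFX ->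
  graev_free_abelian_group x0 eAX ->
  graev_free_boolean_group x0 eBX ->
  exists (Y : topologicalType) (y0 : Y),
    [/\ tychonoff_space Y, countable [set: Y] & ~ discrete_top Y] /\
    [/\
      (forall (FY : topGroupType) (eFY : Y -> FY),
         graev_free_group y0 eFY -> top_quotient FX FY),
      (forall (AY : topGroupType) (eAY : Y -> AY),
         graev_free_abelian_group y0 eAY -> top_quotient AX AY) &
      (forall (BY : topGroupType) (eBY : Y -> BY),
         graev_free_boolean_group y0 eBY -> top_quotient BX BY)].
Proof.
move=> tX cU dU [c Cc] nC x0 FX eFX AX eAX BX eBX HF HA HB.
have Cc' : forall n, U n c by move=> n; exact: Cc n I.
exists (Yt U), (ry U x0); split; first split.
- exact: (Y_tych cU dU Cc').
- exact: Y_count.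
- exact: (Y_nondisc dU Cc').
split => FY eFY HY.
- exact: (final_part cU dU Cc' (P := any_group) (fun _ _ _ _ => I) (fun _ _ => I) HF HY).
- exact: (final_part cU dU Cc' (P := abelian_group) (fun G hG _ _ => hG) (fun G hG => hG) HA HY).
- exact: (final_part cU dU Cc' (P := boolean_group) (fun G hG _ _ => hG) (fun G hG => hG) HB HY).
Qed.
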